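(* Let $J=JCK(Z,\delta)$. Then $\dim_{\mathbb F}\mathrm{Inder}(J)_{\bar0}=4\dim_{\mathbb F}Z=\dim_{\mathbb F}J_{\bar0}$ (dimensions as cardinals).
   Context: Let $\mathbb F$ be a field of characteristic $\neq 2$, $Z$ a unital commutative associative $\mathbb F$-algebra, and $\delta$ a derivation of $Z$ such that $Z\delta(Z)=Z$ (the $\mathbb F$-span of all products $f\delta(g)$, $f,g\in Z$, is $Z$). The Cheng-Kac Jordan superalgebra $J=JCK(Z,\delta)=J_{\bar0}\oplus J_{\bar1}$ is defined as follows: $J_{\bar0}=Z1\oplus Zw_1\oplus Zw_2\oplus Zw_3$ and $J_{\bar1}=Zx\oplus Zx_1\oplus Zx_2\oplus Zx_3$ are free $Z$-modules of rank 4; $J_{\bar0}$ is the $Z$-algebra $(\mathbb F1\oplus\mathbb Fw_1\oplus\mathbb Fw_2\oplus\mathbb Fw_3)\otimes_{\mathbb F}Z$ with $1$ the identity, $w_1^2=w_2^2=1$, $w_3^2=-1$, $w_iw_j=0$ for $i\ne j$. For $f,g\in Z$ and $i,j\in\{1,2,3\}$ the remaining products are: $f(gx)=(fg)x$, $f(gx_j)=(fg)x_j$, $(fw_i)(gx)=(\delta(f)g)x_i$, $(fw_i)(gx_j)=-(fg)x_{i\times j}$, $(fx)(gx)=\delta(f)g-f\delta(g)$, $(fx)(gx_j)=-(fg)w_j$, $(fx_i)(gx)=(fg)w_i$, $(fx_i)(gx_j)=0$, extended by supercommutativity ($ab=(-1)^{|a||b|}ba$), where $x_{1\times2}=-x_{2\times1}=x_3$,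 $x_{1\times3}=-x_{3\times1}=x_2$, $x_{3\times2}=-x_{2\times3}=x_1$, $x_{i\times i}=0$. $D(a,b)$ is the map $c\mapsto a(bc)-(-1)^{|a||b|}b(ac)$, and $\mathrm{Inder}(J)$ is the span of all $D(a,b)$, $a,b\in J$ homogeneous. *)

(* Defs.v *)
From HB Require Import structures.
From mathcomp Require Import all_boot all_order all_algebra.
Set Implicit Arguments. Unset Strict Implicit. Unset Printing Implicit Defensive.
Import GRing.Theory.
Local Open Scope ring_scope.

(* An element of J = JCK(Z, delta), as its 8 coordinates over the free
   Z-module basis:  e0*1 + e1*w1 + e2*w2 + e3*w3  (even part)
                  + o0*x + o1*x1 + o2*x2 + o3*x3    (odd part). *)
Record jck (Z : Type) : Type := JCK {
  je0 : Z; je1 : Z; je2 : Z; je3 : Z;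
  jo0 : Z; jo1 : Z; jo2 : Z; jo3 : Z }.

Section JCKdef.
Variables (F : fieldType) (Z : comAlgType F) (delta : Z -> Z).

Definition jzero : jck Z := JCK 0 0 0 0 0 0 0 0.

Definition jadd (a b : jck Z) : jck Z :=
  JCK (je0 a + je0 b) (je1 a + je1 b) (je2 a + je2 b) (je3 a + je3 b)
      (jo0 a + jo0 b) (jo1 a + jo1 b) (jo2 a + jo2 b) (jo3 a + jo3 b).

Definition jopp (a : jck Z) : jck Z :=
  JCK (- je0 a) (- je1 a) (- je2 a) (- je3 a)
      (- jo0 a) (- jo1 a) (- jo2 a) (- jo3 a).

Definition jscale (c : F) (a : jck Z) : jck Z :=
  JCK (c *: je0 a) (c *: je1 a) (c *: je2 a) (c *: je3 a)
      (c *: jo0 a) (c *: jo1 a) (c *: jo2 a) (c *: jo3 a).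

(* The (bilinear extension of the) Cheng-Kac product, expanded on the basis:
   1 identity; w1^2 = w2^2 = 1, w3^2 = -1, w_i w_j = 0 (i<>j);
   (f w_i)(g x) = (delta f g) x_i ; (f w_i)(g x_j) = -(fg) x_{i x j};
   (f x)(g x) = delta f g - f delta g ; (f x)(g x_j) = -(fg) w_j ;
   (f x_i)(g x) = (fg) w_i ; (f x_i)(g x_j) = 0; plus supercommutativity. *)
Definition jmul (a b : jck Z) : jck Z :=
  let a0 := je0 a in let a1 := je1 a in let a2 := je2 a in let a3 := je3 a in
  let p := jo0 a in let p1 := jo1 a in let p2 := jo2 a in let p3 := jo3 a in
  let b0 := je0 b in let b1 := je1 b in let b2 := je2 b in let b3 := je3 b in
  let q := jo0 b in let q1 := jo1 b in let q2 := jo2 b in let q3 := jo3 b in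
  JCK (a0 * b0 + a1 * b1 + a2 * b2 - a3 * b3 + (delta p * q - p * delta q))
      (a0 * b1 + a1 * b0 - p * q1 + p1 * q)
      (a0 * b2 + a2 * b0 - p * q2 + p2 * q)
      (a0 * b3 + a3 * b0 - p * q3 + p3 * q)
      (a0 * q + b0 * p)
      (a0 * q1 + b0 * p1 + delta a1 * q + delta b1 * p
         + (a2 * q3 - a3 * q2) + (b2 * p3 - b3 * p2))
      (a0 * q2 + b0 * p2 + delta a2 * q + delta b2 * p
         + (a3 * q1 - a1 * q3) + (b3 * p1 - b1 * p3))
      (a0 * q3 + b0 * p3 + delta a3 * q + delta b3 * p
         + (a2 * q1 - a1 * q2) + (b2 * p1 - b1 * p2)).

Definition jeven (a : jck Z) : Prop :=
  jo0 a = 0 /\ jo1 a = 0 /\ jo2 a = 0 /\ jo3 a = 0.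
Definition jodd (a : jck Z) : Prop :=
  je0 a = 0 /\ je1 a = 0 /\ je2 a = 0 /\ je3 a = 0.

Definition jhom (p : bool) (a : jck Z) : Prop :=
  if p then jodd a else jeven a.

Definition jD (pa pb : bool) (a b : jck Z) : jck Z -> jck Z :=
  fun c => if pa && pb then jadd (jmul a (jmul b c)) (jmul b (jmul a c))
           else jadd (jmul a (jmul b c)) (jopp (jmul b (jmul a c))).

Definition Dgen (f : jck Z -> jck Z) : Prop :=
  exists pa pb a b, jhom pa a /\ jhom pb b /\ f = jD pa pb a b.

Definition fadd (f g : jck Z -> jck Z) : jck Z -> jck Z := fun v => jadd (f v) (g v).
Definition fscale (c : F) (f : jck Z -> jck Z) : jck Z -> jck Z := fun v => jscale c (f v).

Inductive inder : (jck Z -> jck Z) -> Prop :=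
  | inder0 : inder (fun _ => jzero)
  | inderS (c : F) (f g : jck Z -> jck Z) :
      Dgen f -> inder g -> inder (fadd (fscale c f) g).

Definition even_map (d : jck Z -> jck Z) : Prop :=
  forall v, (jeven v -> jeven (d v)) /\ (jodd v -> jodd (d v)).

Definition inder_even (d : jck Z -> jck Z) : Prop := inder d /\ even_map d.

Definition z4add (x y : Z * Z * Z * Z) : Z * Z * Z * Z :=
  (x.1.1.1 + y.1.1.1, x.1.1.2 + y.1.1.2, x.1.2 + y.1.2, x.2 + y.2).
Definition z4scale (c : F) (x : Z * Z * Z * Z) : Z * Z * Z * Z :=
  (c *: x.1.1.1, c *: x.1.1.2, c *: x.1.2, c *: x.2).

(* The F-subspace {t | P t} of the F-vector space (T, tadd, tscale) is
   F-linearly isomorphic to Z^4, i.e. has F-dimension (as a cardinal)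
   equal to 4 dim_F Z. *)
Definition iso_to_Z4 (T : Type) (tadd : T -> T -> T) (tscale : F -> T -> T)
    (P : T -> Prop) : Prop :=
  exists phi : Z * Z * Z * Z -> T,
    (forall c x y, phi (z4add (z4scale c x) y) = tadd (tscale c (phi x)) (phi y))
    /\ injective phi
    /\ (forall t, P t <-> exists x, t = phi x).

End JCKdef.

(* Main.v *)
Require Import Defs.
From HB Require Import structures.
From mathcomp Require Import all_boot all_order all_algebra.
From Stdlib Require Import Ring FunctionalExtensionality.
Import GRing.Theory.
Local Open Scope ring_scope.

Section Work.
Variables (F : fieldType) (Z : comAlgType F) (delta : Z -> Z).
Hypothesis hder_add : forall f g : Z, delta (f + g) = delta f + delta g.
Hypothesis hder_scale : forall (c : F) (f : Z), delta (c *: f) = c *: delta f.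
Hypothesis hchar : (2%:R : F) != 0.
Hypothesis hspan : forall z : Z, exists (n : nat) (f g : 'I_n -> Z),
             z = \sum_(i < n) f i * delta (g i).
Hypothesis hder_leib : forall f g : Z, delta (f * g) = delta f * g + f * delta g.

Definition ZT : Type := GRing.ComAlgebra.sort Z.
Definition zadd (x y : ZT) : ZT := x + y.
Definition zmul (x y : ZT) : ZT := x * y.
Definition zopp (x : ZT) : ZT := - x.
Definition zsub (x y : ZT) : ZT := x - y.
Definition zzero : ZT := 0.
Definition zone : ZT := 1.
Lemma Zrth : @ring_theory ZT zzero zone zadd zmul zsub zopp eq.
Proof.
constructor; rewrite /zadd/zmul/zsub/zopp/zzero/zone=>*; [exact: add0r|exact: addrC|exact: addrA|exact: mul1r|exact: mulrC|exact: mulrA|exact: mulrDl|done|exact: subrr].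
Qed.
Add Ring Zr : Zrth.
Lemma zaddE (x y : Z) : x + y = zadd x y. Proof. by []. Qed.
Lemma zmulE (x y : Z) : x * y = zmul x y. Proof. by []. Qed.
Lemma zoppE (x : Z) : - x = zopp x. Proof. by []. Qed.
Lemma zzeroE : (0 : Z) = zzero. Proof. by []. Qed.
Lemma zoneE : (1 : Z) = zone. Proof. by []. Qed.

Lemma d0 : delta 0 = 0.
Proof. by apply: (addrI (delta 0)); rewrite -hder_add !addr0. Qed.
Lemma dN x : delta (- x) = - delta x.
Proof. apply/eqP; rewrite -subr_eq0 opprK -hder_add addNr d0 //. Qed.
Lemma d1 : delta 1 = 0.
Proof. have h := hder_leib 1 1; rewrite !mulr1 !mul1r in h. by apply: (addrI (delta 1)); rewrite addr0 -h. Qed.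

Ltac dsimp := repeat progress rewrite ?hder_add ?hder_leib ?dN ?d0 ?d1 ?hder_scale.
Lemma zwrap (a b : ZT) : zadd zzero a = zadd zzero b -> a = b.
Proof. by rewrite /zadd /zzero !add0r. Qed.
Ltac zring := dsimp; rewrite ?zaddE ?zmulE ?zoppE ?zzeroE ?zoneE;
  match goal with |- @eq _ ?a ?b => change (@eq ZT a b) end; apply: zwrap; ring.

Definition m2 (x : Z) := - (x + x).

Definition phiZ (z : Z * Z * Z * Z) (c : jck Z) : jck Z :=
  let z0 := z.1.1.1 in let z1 := z.1.1.2 in let z2 := z.1.2 in let z3 := z.2 in
  let: JCK c0 c1 c2 c3 c4 c5 c6 c7 := c in
  JCK (m2 (z0 * delta c0))
      (z1 * c2 - z2 * c3 + m2 (z0 * delta c1))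
      (- (z1 * c1) - z3 * c3 + m2 (z0 * delta c2))
      (- (z2 * c1) - z3 * c2 + m2 (z0 * delta c3))
      (c4 * delta z0 + m2 (z0 * delta c4))
      (z1 * c6 - z2 * c7 + c4 * delta z3 - c5 * delta z0 + m2 (z0 * delta c5))
      (- (z1 * c5) - c4 * delta z2 - z3 * c7 - c6 * delta z0 + m2 (z0 * delta c6))
      (- (c4 * delta z1) - z2 * c5 - z3 * c6 - c7 * delta z0 + m2 (z0 * delta c7)).

Definition Qe (a b : jck Z) : Z * Z * Z * Z :=
  (0, je1 a * je2 b - je2 a * je1 b, je1 a * je3 b - je3 a * je1 b,
   je2 a * je3 b - je3 a * je2 b).
Definition Qo (a b : jck Z) : Z * Z * Z * Z :=
  (jo0 a * jo0 b, - (jo0 a * jo3 b + jo3 a * jo0 b),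
   - (jo0 a * jo2 b + jo2 a * jo0 b), jo0 a * jo1 b + jo1 a * jo0 b).


Ltac unf := cbv beta iota zeta delta [jD jmul jadd jopp jscale jzero phiZ Qe Qo m2 je0 je1 je2 je3 jo0 jo1 jo2 jo3 andb z4add z4scale fst snd].

Lemma D_even a b c : jeven a -> jeven b -> jD delta false false a b c = phiZ (Qe a b) c.
Proof.
case: a => a0 a1 a2 a3 p p1 p2 p3; case: b => b0 b1 b2 b3 q q1 q2 q3.
case: c => c0 c1 c2 c3 c4 c5 c6 c7.
rewrite /jeven /= => [[-> [-> [-> ->]]]] [[-> [-> [-> ->]]]].
unf; congr JCK; zring.
Qed.

Lemma D_odd a b c : jodd a -> jodd b -> jD delta true true a b c = phiZ (Qo a b) c.
Proof.
case: a => a0 a1 a2 a3 p p1 p2 p3; case: b => b0 b1 b2 b3 q q1 q2 q3.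
case: c => c0 c1 c2 c3 c4 c5 c6 c7.
rewrite /jodd /= => [[-> [-> [-> ->]]]] [[-> [-> [-> ->]]]].
unf; congr JCK; zring.
Qed.

Lemma jmul_addr a u v : jmul delta a (jadd u v) = jadd (jmul delta a u) (jmul delta a v).
Proof.
case: a => a0 a1 a2 a3 p p1 p2 p3.
case: u => c0 c1 c2 c3 c4 c5 c6 c7; case: v => e0 e1 e2 e3 e4 e5 e6 e7.
unf; congr JCK; zring.
Qed.

Lemma jaddA (x y z : jck Z) : jadd x (jadd y z) = jadd (jadd x y) z.
Proof. case: x; case: y; case: z => *; unf; congr JCK; zring. Qed.
Lemma jaddC (x y : jck Z) : jadd x y = jadd y x.
Proof. case: x; case: y => *; unf; congr JCK; zring. Qed.
Lemma jadd0 (x : jck Z) : jadd x (jzero Z) = x.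
Proof. case: x => *; unf; congr JCK; zring. Qed.

Lemma jaddACA (x y z w : jck Z) : jadd (jadd x y) (jadd z w) = jadd (jadd x z) (jadd y w).
Proof. case: x; case: y; case: z; case: w => *; unf; congr JCK; zring. Qed.
Lemma joppD (x y : jck Z) : jopp (jadd x y) = jadd (jopp x) (jopp y).
Proof. case: x; case: y => *; unf; congr JCK; zring. Qed.
Lemma jscaleD k (x y : jck Z) : jscale k (jadd x y) = jadd (jscale k x) (jscale k y).
Proof. case: x; case: y => *; unf; congr JCK; exact: scalerDr. Qed.

Lemma D_add pa pb a b u v :
  jD delta pa pb a b (jadd u v) = jadd (jD delta pa pb a b u) (jD delta pa pb a b v).
Proof.
rewrite /jD; case: (pa && pb); rewrite !jmul_addr ?joppD; exact: jaddACA.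
Qed.

Lemma jeven_add (x y : jck Z) : jeven x -> jeven y -> jeven (jadd x y).
Proof.
case: x => ? ? ? ? ? ? ? ?; case: y => ? ? ? ? ? ? ? ?; rewrite /jeven /= => [[-> [-> [-> ->]]]] [[-> [-> [-> ->]]]]; rewrite !addr0; intuition.
Qed.
Lemma jodd_add (x y : jck Z) : jodd x -> jodd y -> jodd (jadd x y).
Proof.
case: x => ? ? ? ? ? ? ? ?; case: y => ? ? ? ? ? ? ? ?; rewrite /jodd /= => [[-> [-> [-> ->]]]] [[-> [-> [-> ->]]]]; rewrite !addr0; intuition.
Qed.
Lemma jeven_scale k (x : jck Z) : jeven x -> jeven (jscale k x).
Proof. case: x => ? ? ? ? ? ? ? ?; rewrite /jeven /= => [[-> [-> [-> ->]]]]; rewrite !scaler0; intuition. Qed.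
Lemma jodd_scale k (x : jck Z) : jodd x -> jodd (jscale k x).
Proof. case: x => ? ? ? ? ? ? ? ?; rewrite /jodd /= => [[-> [-> [-> ->]]]]; rewrite !scaler0; intuition. Qed.

Lemma D_mixed pa pb (a b : jck Z) : pa != pb -> jhom pa a -> jhom pb b ->
  forall v, (jeven v -> jodd (jD delta pa pb a b v)) /\ (jodd v -> jeven (jD delta pa pb a b v)).
Proof.
case: a => a0 a1 a2 a3 p p1 p2 p3; case: b => b0 b1 b2 b3 q q1 q2 q3.
case: pa; case: pb => //= _; rewrite /jeven /jodd /=;
  move=> [-> [-> [-> ->]]] [-> [-> [-> ->]]] [c0 c1 c2 c3 c4 c5 c6 c7];
  split => /= -[-> [-> [-> ->]]]; unf; (split; [|split; [|split]]); zring.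
Qed.

Lemma phi_even z : even_map (phiZ z).
Proof.
case: z => [[[z0 z1] z2] z3] [c0 c1 c2 c3 c4 c5 c6 c7];
  rewrite /jeven /jodd; split => /= -[-> [-> [-> ->]]]; unf; (split; [|split; [|split]]); zring.
Qed.

Lemma phi_lin k x y v :
  phiZ (z4add (z4scale k x) y) v = jadd (jscale k (phiZ x v)) (phiZ y v).
Proof.
case: x => [[[x0 x1] x2] x3]; case: y => [[[y0 y1] y2] y3].
case: v => c0 c1 c2 c3 c4 c5 c6 c7.
have E : forall t : Z, k *: t = k%:A * t by move=> t; rewrite mulr_algl.
unf; congr JCK; dsimp; move: (k%:A) E => K E; rewrite ?E; zring.
Qed.

Definition oddm (psi : jck Z -> jck Z) :=
  (forall v, (jeven v -> jodd (psi v)) /\ (jodd v -> jeven (psi v))) /\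
  (forall u v, psi (jadd u v) = jadd (psi u) (psi v)).

Definition z4zero : Z * Z * Z * Z := (0, 0, 0, 0).

Lemma decomp d : inder delta d ->
  exists z psi, oddm psi /\ d = fadd (phiZ z) psi.
Proof.
elim => [|c f g [pa [pb [a [b [ha [hb ->]]]]]] _ [z [psi [[hpar hadd] ->]]]].
  exists z4zero, (fun _ => jzero Z); split.
    split => [v|u v]; last by rewrite jadd0.
    by rewrite /jeven /jodd /=; intuition.
  apply: functional_extensionality => -[c0 c1 c2 c3 c4 c5 c6 c7].
  rewrite /fadd; unf; congr JCK; zring.
case: (boolP (pa == pb)) => [/eqP epb | npb].
  subst pb.
  have -> : jD delta pa pa a b = phiZ (if pa then Qo a b else Qe a b).
    apply: functional_extensionality => v.
    by case: pa ha hb => /= ha hb; [rewrite D_odd | rewrite D_even].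
  exists (z4add (z4scale c (if pa then Qo a b else Qe a b)) z), psi; split => //.
  apply: functional_extensionality => v.
  by rewrite /fadd /fscale phi_lin jaddA.
exists z, (fun v => jadd (jscale c (jD delta pa pb a b v)) (psi v)); split.
  split => [v|u v].
    have [h1 h2] := D_mixed pa pb a b npb ha hb v; have [h3 h4] := hpar v.
    split => hv.
      by apply: jodd_add; [apply: jodd_scale; apply: h1|apply: h3].
    by apply: jeven_add; [apply: jeven_scale; apply: h2|apply: h4].
  by rewrite D_add jscaleD hadd jaddACA.
apply: functional_extensionality => v.
rewrite /fadd /fscale jaddA (jaddC (jscale _ _)) -jaddA //.
Qed.

Lemma jeven_jodd0 (x : jck Z) : jeven x -> jodd x -> x = jzero Z.
Proof.
case: x => ? ? ? ? ? ? ? ?; rewrite /jeven /jodd /=.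
by move=> [-> [-> [-> ->]]] [-> [-> [-> ->]]].
Qed.

Lemma jeven_sub (x y : jck Z) : jeven (jadd x y) -> jeven x -> jeven y.
Proof.
case: x => ? ? ? ? ? ? ? ?; case: y => ? ? ? ? ? ? ? ?; rewrite /jeven /=.
move=> [h0 [h1 [h2 h3]]] [e0 [e1 [e2 e3]]].
by move: h0 h1 h2 h3; rewrite e0 e1 e2 e3 !add0r.
Qed.

Lemma jodd_sub (x y : jck Z) : jodd (jadd x y) -> jodd x -> jodd y.
Proof.
case: x => ? ? ? ? ? ? ? ?; case: y => ? ? ? ? ? ? ? ?; rewrite /jodd /=.
move=> [h0 [h1 [h2 h3]]] [e0 [e1 [e2 e3]]].
by move: h0 h1 h2 h3; rewrite e0 e1 e2 e3 !add0r.
Qed.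

Lemma inder_even_phi d : inder_even delta d -> exists z, d = phiZ z.
Proof.
move=> [/decomp [z [psi [[hpar hadd] ->]]] he].
have hz : forall v, psi v = jzero Z.
  move=> [v0 v1 v2 v3 v4 v5 v6 v7].
  have -> : JCK v0 v1 v2 v3 v4 v5 v6 v7 =
     jadd (JCK v0 v1 v2 v3 0 0 0 0) (JCK 0 0 0 0 v4 v5 v6 v7).
    by unf; congr JCK; zring.
  rewrite hadd.
  set ve := JCK v0 v1 v2 v3 0 0 0 0; set vo := JCK 0 0 0 0 v4 v5 v6 v7.
  have eve : jeven ve by rewrite /jeven.
  have ovo : jodd vo by rewrite /jodd.
  rewrite (@jeven_jodd0 (psi ve)); last exact: (hpar ve).1.
    rewrite (@jeven_jodd0 (psi vo)); first by rewrite jadd0.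
      exact: (hpar vo).2.
    apply: (@jodd_sub (phiZ z vo)); first exact: (he vo).2.
    exact: (phi_even z vo).2.
  apply: (@jeven_sub (phiZ z ve)); first exact: (he ve).1.
  exact: (phi_even z ve).1.
exists z; apply: functional_extensionality => v.
by rewrite /fadd hz jadd0.
Qed.

Definition Xz (h : Z) : jck Z := JCK 0 0 0 0 h 0 0 0.
Definition Wz1 (h : Z) : jck Z := JCK 0 h 0 0 0 0 0 0.
Definition Wz2 (h : Z) : jck Z := JCK 0 0 h 0 0 0 0 0.
Definition Wz3 (h : Z) : jck Z := JCK 0 0 0 h 0 0 0 0.

Lemma phi_inder z : inder delta (phiZ z).
Proof.
case: z => [[[z0 z1] z2] z3].
have -> : phiZ (z0, z1, z2, z3) =
  fadd (fscale 1 (jD delta true true (Xz 1) (Xz z0)))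
  (fadd (fscale 1 (jD delta false false (Wz1 1) (Wz2 z1)))
  (fadd (fscale 1 (jD delta false false (Wz1 1) (Wz3 z2)))
  (fadd (fscale 1 (jD delta false false (Wz2 1) (Wz3 z3))) (fun _ => jzero Z)))).
  apply: functional_extensionality => -[c0 c1 c2 c3 c4 c5 c6 c7].
  rewrite /fadd /fscale /Xz /Wz1 /Wz2 /Wz3; unf; rewrite !scale1r; congr JCK; zring.
have hX : forall h, jodd (Xz h) by move=> h; rewrite /jodd.
have hW1 : forall h, jeven (Wz1 h) by move=> h; rewrite /jeven.
have hW2 : forall h, jeven (Wz2 h) by move=> h; rewrite /jeven.
have hW3 : forall h, jeven (Wz3 h) by move=> h; rewrite /jeven.
apply: inderS; first by exists true, true, (Xz 1), (Xz z0).
apply: inderS; first by exists false, false, (Wz1 1), (Wz2 z1).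
apply: inderS; first by exists false, false, (Wz1 1), (Wz3 z2).
apply: inderS; first by exists false, false, (Wz2 1), (Wz3 z3).
exact: inder0.
Qed.

Lemma phi_inj : injective phiZ.
Proof.
move=> [[[x0 x1] x2] x3] [[[y0 y1] y2] y3] H.
have e : forall v, phiZ (x0, x1, x2, x3) v = phiZ (y0, y1, y2, y3) v by move=> v; rewrite H.
have v1 : forall a b c d : Z, je2 (phiZ (a, b, c, d) (Wz1 1)) = - b.
  by move=> *; rewrite /Wz1; unf; zring.
have v2 : forall a b c d : Z, je3 (phiZ (a, b, c, d) (Wz1 1)) = - c.
  by move=> *; rewrite /Wz1; unf; zring.
have v3 : forall a b c d : Z, je3 (phiZ (a, b, c, d) (Wz2 1)) = - d.
  by move=> *; rewrite /Wz2; unf; zring.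
have v4 : forall a b c d : Z, jo0 (phiZ (a, b, c, d) (Xz 1)) = delta a.
  by move=> *; rewrite /Xz; unf; zring.
have v5 : forall a b c d g : Z, jo0 (phiZ (a, b, c, d) (Xz g)) = g * delta a - (a * delta g + a * delta g).
  by move=> *; rewrite /Xz; unf; zring.
have e1 : x1 = y1 by have := congr1 (@je2 _) (e (Wz1 1)); rewrite !v1 => /oppr_inj.
have e2 : x2 = y2 by have := congr1 (@je3 _) (e (Wz1 1)); rewrite !v2 => /oppr_inj.
have e3 : x3 = y3 by have := congr1 (@je3 _) (e (Wz2 1)); rewrite !v3 => /oppr_inj.
have hd : delta x0 = delta y0 by have := congr1 (@jo0 _) (e (Xz 1)); rewrite !v4.
have hg : forall g, (x0 - y0) * delta g = 0.
  move=> g; have := congr1 (@jo0 _) (e (Xz g)); rewrite !v5 hd => /addrI /oppr_inj h.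
  have : (2%:R : F) *: ((x0 - y0) * delta g) = 0.
    rewrite scaler_nat mulr2n mulrBl addrACA -opprD h subrr //.
  by move/eqP; rewrite scaler_eq0 (negbTE hchar) /= => /eqP.
have e0 : x0 = y0.
  apply/eqP; rewrite -subr_eq0; apply/eqP.
  have [n [f [g h1]]] := hspan 1.
  rewrite -[x0 - y0]mulr1 h1 mulr_sumr big1 // => i _.
  by rewrite mulrCA hg mulr0.
by rewrite e0 e1 e2 e3.
Qed.

Lemma main :
  iso_to_Z4 Z (@fadd F Z) (@fscale F Z) (inder_even delta)
  /\ iso_to_Z4 Z (@jadd F Z) (@jscale F Z) (@jeven F Z).
Proof.
split.
  exists phiZ; split; [|split].
  - move=> c x y; apply: functional_extensionality => v.
    by rewrite /fadd /fscale phi_lin.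
  - exact: phi_inj.
  - move=> t; split; first exact: inder_even_phi.
    by move=> [x ->]; split; [exact: phi_inder|exact: phi_even].
exists (fun x => JCK x.1.1.1 x.1.1.2 x.1.2 x.2 0 0 0 0); split; [|split].
- by move=> c [[[x0 x1] x2] x3] [[[y0 y1] y2] y3]; rewrite /z4add /z4scale /jadd /jscale /= scaler0 addr0.
- by move=> [[[x0 x1] x2] x3] [[[y0 y1] y2] y3] /= [-> -> -> ->].
- move=> [t0 t1 t2 t3 t4 t5 t6 t7]; split.
    by rewrite /jeven /= => -[-> [-> [-> ->]]]; exists (t0, t1, t2, t3).
  by move=> [x [-> -> -> -> -> -> -> ->]]; rewrite /jeven.
Qed.
End Work.

Theorem corollary4p2 (F : fieldType) (Z : comAlgType F) (delta : Z -> Z)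
  (hchar : (2%:R : F) != 0)
  (hder_add : forall f g : Z, delta (f + g) = delta f + delta g)
  (hder_scale : forall (c : F) (f : Z), delta (c *: f) = c *: delta f)
  (hder_leib : forall f g : Z, delta (f * g) = delta f * g + f * delta g)
  (hspan : forall z : Z, exists (n : nat) (f g : 'I_n -> Z),
             z = \sum_(i < n) f i * delta (g i)) :
  iso_to_Z4 Z (@fadd F Z) (@fscale F Z) (inder_even delta)
  /\ iso_to_Z4 Z (@jadd F Z) (@jscale F Z) (@jeven F Z).
Proof. exact: (@main F Z delta hder_add hder_scale hchar hspan hder_leib). Qed.
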